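(* In the public goods model, every MNW allocation is Pareto-optimal, satisfies Prop1, and satisfies $\frac1n$-RRS. Further, when $k\ge n$, every MNW allocation satisfies $\frac{1}{2n-1}$-Prop.
   Context: Public goods model: agents $[n]$, goods $G=[m]$, integer $0\le k\le m$, nonnegative integer additive values $v_{ij}$ ($v_i(S)=\sum_{j\in S}v_{ij}$), every agent having some good with $v_{ij}>0$. An allocation is $x\subseteq G$ with $|x|\le k$. $\mathrm{NW}(x)=(\prod_i v_i(x))^{1/n}$; an MNW allocation maximizes NW over allocations, where if all allocations have NW $0$, an MNW allocation maximizes the number of agents with positive utility and, subject to that, the product of positive utilities. $y$ Pareto-dominates $x$ if $v_i(y)\ge v_i(x)$ for all $i$ with at least one strict; $x$ is Pareto-optimal if no allocation Pareto-dominates it. $\mathrm{Prop}_i=\frac1n\max_{|y|\le k}v_i(y)$ and $\mathrm{RRS}_i=\max_{|y|\le\lfloor k/n\rfloor}v_i(y)$. For $\alpha\in(0,1]$: $x$ is $\alpha$-Prop if $v_i(x)\ge\alpha\,\mathrm{Prop}_i$ for all $i$; $x$ is $\alpha$-RRS if $v_i(x)\ge\alpha\,\mathrm{RRS}_i$ for all $i$; $x$ is Prop1 if for every agent $i$ there exist $g\in x$ and $g'\in G$ with $v_i((x\setminus\{g\})\cup\{g'\})\ge\mathrm{Prop}_i$. *)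

(* Defs.v *)
From mathcomp Require Import all_boot all_order all_algebra.
Set Implicit Arguments. Unset Strict Implicit. Unset Printing Implicit Defensive.
Import Order.TTheory GRing.Theory Num.Theory.

Section PublicGoods.
Variables (n m : nat).
(* agents are 'I_n, goods are 'I_m, v i j = value of agent i for good j *)
Variable v : 'I_n -> 'I_m -> nat.

Definition util (i : 'I_n) (x : {set 'I_m}) : nat := \sum_(j in x) v i j.

Definition feasible (k : nat) (x : {set 'I_m}) : bool := #|x| <= k.

(* NW(x)^n ; maximizing NW is the same as maximizing this product *)
Definition nw_prod (x : {set 'I_m}) : nat := \prod_(i < n) util i x.

Definition num_pos (x : {set 'I_m}) : nat := #|[set i : 'I_n | 0 < util i x]|.

Definition pos_prod (x : {set 'I_m}) : nat :=
  \prod_(i < n | 0 < util i x) util i x.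

Definition MNW (k : nat) (x : {set 'I_m}) : Prop :=
  feasible k x /\
  ((exists y, feasible k y /\ 0 < nw_prod y) ->
     forall y, feasible k y -> nw_prod y <= nw_prod x) /\
  ((forall y, feasible k y -> nw_prod y = 0) ->
     (forall y, feasible k y -> num_pos y <= num_pos x) /\
     (forall y, feasible k y -> num_pos y = num_pos x ->
                pos_prod y <= pos_prod x)).

Definition pareto_dominates (y x : {set 'I_m}) : Prop :=
  (forall i, util i x <= util i y) /\ (exists i, util i x < util i y).

Definition pareto_optimal (k : nat) (x : {set 'I_m}) : Prop :=
  feasible k x /\ ~ (exists y, feasible k y /\ pareto_dominates y x).

Definition maxval (k : nat) (i : 'I_n) : nat :=
  \max_(y : {set 'I_m} | feasible k y) util i y.

Local Open Scope ring_scope.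

Definition Prop_share (k : nat) (i : 'I_n) : rat := (maxval k i)%:R / n%:R.

Definition RRS (k : nat) (i : 'I_n) : nat := maxval (k %/ n) i.

Definition alpha_Prop (alpha : rat) (k : nat) (x : {set 'I_m}) : Prop :=
  forall i, (util i x)%:R >= alpha * Prop_share k i.

Definition alpha_RRS (alpha : rat) (k : nat) (x : {set 'I_m}) : Prop :=
  forall i, (util i x)%:R >= alpha * (RRS k i)%:R.

Definition Prop1 (k : nat) (x : {set 'I_m}) : Prop :=
  forall i, exists g, exists g' : 'I_m,
    g \in x /\ (util i ((x :\ g) :|: [set g']))%:R >= Prop_share k i.

End PublicGoods.

(* Main.v *)
Require Import Defs.
From mathcomp Require Import all_boot all_order all_algebra.
From mathcomp Require Import lra zify.
From Stdlib Require Import Classical.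
Import Order.TTheory GRing.Theory Num.Theory.
Set Implicit Arguments. Unset Strict Implicit. Unset Printing Implicit Defensive.

Section Aux.
Variables (n m : nat) (v : 'I_n -> 'I_m -> nat).

Lemma maxval_wit k i : exists S, feasible k S /\ util v i S = maxval v k i.
Proof.
have f0 : feasible k (set0 : {set 'I_m}) by rewrite /feasible cards0.
case: (@arg_maxnP _ set0 (feasible k) (util v i) f0) => S fS HS.
exists S; split=> //; apply/eqP; rewrite eqn_leq leq_bigmax_cond //=.
by apply/bigmax_leqP => y fy; apply: HS.
Qed.

Lemma maxval_ge k i y : feasible k y -> (util v i y <= maxval v k i)%N.
Proof. by move=> fy; apply: leq_bigmax_cond. Qed.

Lemma v_le_util i g (X : {set 'I_m}) : g \in X -> (v i g <= util v i X)%N.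
Proof. by move=> gX; rewrite /util (big_setD1 g gX) /= leq_addr. Qed.

Lemma util_split i (X Y : {set 'I_m}) :
  util v i X = (util v i (X :&: Y) + util v i (X :\: Y))%N.
Proof. by rewrite /util (big_setID Y). Qed.

Lemma util_swap i (x : {set 'I_m}) h g : h \in x -> g \notin x ->
  (util v i (x :\ h :|: [set g]) + v i h = util v i x + v i g)%N.
Proof.
move=> hx gx.
rewrite setUC /util big_setU1 /=; last by rewrite in_setD1 (negbTE gx) andbF.
by rewrite [in RHS](big_setD1 h hx) /=; lia.
Qed.

Lemma util_add i (x : {set 'I_m}) g : g \notin x ->
  (util v i (g |: x) = v i g + util v i x)%N.
Proof. by move=> gx; rewrite /util big_setU1. Qed.

Lemma util_le_card i (S : {set 'I_m}) g' : (forall g, v i g <= v i g')%N ->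
  (util v i S <= #|S| * v i g')%N.
Proof.
move=> H; rewrite /util -sum_nat_const; apply: leq_sum => g _; exact: H.
Qed.

Lemma util_set0 i : util v i set0 = 0%N.
Proof. by rewrite /util big_set0. Qed.

Local Open Scope ring_scope.

Lemma prod_ge_1sub (I : finType) (P : pred I) (F : I -> rat) :
  (forall j, P j -> 0 <= F j <= 1) ->
  1 - \sum_(j | P j) F j <= \prod_(j | P j) (1 - F j).
Proof.
move=> HF.
have : (1 - \sum_(j | P j) F j <= \prod_(j | P j) (1 - F j)) /\ 0 <= \sum_(j | P j) F j.
  apply: (big_rec2 (fun s p => 1 - s <= p /\ 0 <= s)); first by split; lra.
  move=> j s p Pj [H1 H2]; have /andP[a b] := HF j Pj; split; last lra.
  have : (1 - F j) * (1 - s) <= (1 - F j) * p by apply: ler_wpM2l; lra.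
  nra.
by case.
Qed.

Definition cc (x : {set 'I_m}) (i : 'I_n) (h : 'I_m) : rat :=
  \sum_(j | j != i) (v j h)%:R / (util v j x)%:R.

Lemma cc_ge0 x i h : 0 <= cc x i h.
Proof. by apply: sumr_ge0 => j _; apply: divr_ge0. Qed.

Lemma PI i (x : {set 'I_m}) h g : (forall j, 0 < util v j x)%N -> h \in x -> g \notin x ->
  (nw_prod v (x :\ h :|: [set g]) <= nw_prod v x)%N ->
  (util v i (x :\ h :|: [set g]))%:R * (1 - cc x i h) <= (util v i x)%:R.
Proof.
move=> Hpos hx gx Hnw.
set y := x :\ h :|: [set g].
have Hy j : (util v j y)%:R = (util v j x)%:R - (v j h)%:R + (v j g)%:R :> rat.
  have := congr1 (fun t => t%:R : rat) (util_swap j hx gx).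
  rewrite /= !natrD => E; rewrite /y; lra.
have Hvh j : (v j h <= util v j x)%N by apply: v_le_util.
have : (nw_prod v y)%:R <= (nw_prod v x)%:R :> rat by rewrite ler_nat.
rewrite /nw_prod !natr_prod (bigD1 i) //= [X in _ <= X](bigD1 i) //=.
set P := \prod_(j | j != i) (util v j x)%:R.
have Pp : 0 < P by apply: prodr_gt0 => j _; rewrite ltr0n.
have H1 : P * (1 - cc x i h) <= \prod_(j | j != i) (util v j y)%:R :> rat.
  apply: (@le_trans _ _ (P * \prod_(j | j != i) (1 - (v j h)%:R / (util v j x)%:R))).
    apply: ler_wpM2l; first exact: ltW.
    apply: prod_ge_1sub => j _; apply/andP; split; first by apply: divr_ge0.
    by rewrite ler_pdivrMr ?ltr0n // mul1r ler_nat.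
  rewrite /P -big_split /=; apply: ler_prod => j _; apply/andP; split.
    rewrite mulrBr mulr1 mulrC divfK; last by rewrite pnatr_eq0 -lt0n.
    by rewrite subr_ge0 ler_nat.
  rewrite mulrBr mulr1 mulrC divfK; last by rewrite pnatr_eq0 -lt0n.
  rewrite Hy; have := ler0n rat (v j g); lra.
move=> H2.
have H3 : (util v i y)%:R * (P * (1 - cc x i h)) <= (util v i x)%:R * P.
  apply: le_trans H2; apply: ler_wpM2l => //.
rewrite -(ler_pM2l Pp); lra.
Qed.

Lemma sum_cc i (x X : {set 'I_m}) : (forall j, 0 < util v j x)%N ->
  \sum_(h in x :\: X) cc x i h <= (n.-1)%:R.
Proof.
move=> Hpos.
have E : \sum_(h in x) cc x i h = (n.-1)%:R.
  rewrite /cc exchange_big /=.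
  rewrite (eq_bigr (fun _ => 1)); last first.
    move=> j _; rewrite -mulr_suml -natr_sum divff //.
    by rewrite pnatr_eq0 -lt0n; apply: Hpos.
  by rewrite sumr_const cardC1 card_ord.
rewrite -E [X in _ <= X](big_setID X) /= lerDr.
by apply: sumr_ge0 => h _; apply: cc_ge0.
Qed.

End Aux.

Local Open Scope ring_scope.

Lemma pair_sum (I : finType) (A B : {set I}) (f c M : I -> rat) (C : rat) :
  (forall g h, g \in B -> h \in A -> f g - f h <= c h * M g) ->
  (forall g, g \in B -> 0 <= M g) -> \sum_(h in A) c h <= C ->
  #|A|%:R * \sum_(g in B) f g - #|B|%:R * \sum_(h in A) f h
    <= C * \sum_(g in B) M g.
Proof.
move=> H HM HC.
have step g : g \in B -> #|A|%:R * f g - \sum_(h in A) f h <= C * M g.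
  move=> gB.
  have : \sum_(h in A) (f g - f h) <= \sum_(h in A) c h * M g.
    by apply: ler_sum => h hA; apply: H.
  rewrite sumrB sumr_const -mulr_suml => H1.
  apply: (@le_trans _ _ ((\sum_(h in A) c h) * M g)); first by rewrite mulr_natl.
  apply: ler_wpM2r => //; exact: HM.
have : \sum_(g in B) (#|A|%:R * f g - \sum_(h in A) f h) <= \sum_(g in B) C * M g.
  by apply: ler_sum.
by rewrite sumrB sumr_const -mulr_sumr -mulr_sumr -[_ *+ #|B|]mulr_natl.
Qed.

Lemma prod_strict (I : finType) (P : pred I) (f g : I -> nat) i0 :
  (forall j, P j -> 0 < f j <= g j)%N -> P i0 -> (f i0 < g i0)%N ->
  (\prod_(j | P j) f j < \prod_(j | P j) g j)%N.
Proof.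
move=> H Pi0 lt0.
rewrite (bigD1 i0) // [X in (_ < X)%N](bigD1 i0) //=.
have H1 : (\prod_(j | P j && (j != i0)) f j <= \prod_(j | P j && (j != i0)) g j)%N.
  by apply: leq_prod => j /andP[Pj _]; case/andP: (H j Pj).
have H2 : (0 < \prod_(j | P j && (j != i0)) f j)%N.
  by apply: prodn_cond_gt0 => j /andP[Pj _]; case/andP: (H j Pj).
nia.
Qed.

Lemma fin1 (a b s PS N u : rat) :
  a * (PS * N - s) - b * (u - s) <= (N - 1) * (PS * b) ->
  b <= a -> 1 <= b -> 1 <= N -> 0 <= s -> s <= u -> u < PS -> 0 <= PS -> False.
Proof.
move=> Hsum ab b1 n1 s0 su Hu PS0.
have h1 : 0 <= (a - b) * (u - s) by apply: mulr_ge0; lra.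
have h2 : 0 <= (a - b) * ((N - 1) * PS) by apply: mulr_ge0; [lra | apply: mulr_ge0; lra].
have h3 : 0 < a * (PS - u) by apply: mulr_gt0; lra.
nra.
Qed.

Lemma fin2 (a b w q p N : rat) :
  a * w - b * q <= (N - 1) * ((p + q) * b + w) -> b + N - 1 <= a -> 1 <= b ->
  1 <= N -> 0 <= p -> 0 <= q -> 0 <= w -> p + w <= N * (p + q).
Proof.
move=> H ba b1 N1 p0 q0 w0.
set X := q + (N - 1) * (p + q).
have X0 : 0 <= X by rewrite /X; nra.
have h1 : (a - N + 1) * w <= b * X by rewrite /X; nra.
have h2 : b * X <= (a - N + 1) * X by apply: ler_wpM2r; lra.
have h3 : 0 <= (a - N + 1) * (X - w) by nra.
have : 0 <= X - w by move: h3; rewrite pmulr_rge0 //; lra.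
rewrite /X; nra.
Qed.

Lemma util_U1_le n m (v : 'I_n -> 'I_m -> nat) i (A : {set 'I_m}) b :
  (util v i (A :|: [set b]) <= util v i A + v i b)%N.
Proof.
case: (boolP (b \in A)) => bA.
  have -> : A :|: [set b] = A by apply/setUidPl; rewrite sub1set.
  exact: leq_addr.
by rewrite setUC util_add // addnC.
Qed.

Lemma util_D1_le n m (v : 'I_n -> 'I_m -> nat) i (A : {set 'I_m}) g :
  (util v i (A :\ g) <= util v i A)%N.
Proof. by rewrite [X in (_ <= X)%N](util_split v i A [set g]) leq_addl. Qed.

Section Main.
Variables (n m k : nat) (v : 'I_n -> 'I_m -> nat).
Hypotheses (hn : (0 < n)%N) (hk : (k <= m)%N)
  (hv : forall i : 'I_n, exists j : 'I_m, (0 < v i j)%N)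
  (x : {set 'I_m}) (hx : MNW v k x).

Definition C1 := exists y, feasible k y /\ (0 < nw_prod v y)%N.

Lemma C1_pos : C1 -> (forall j, 0 < util v j x)%N /\
  (forall y, feasible k y -> nw_prod v y <= nw_prod v x)%N.
Proof.
move=> c1; case: hx => fx [H1 _]; have Hmax := H1 c1.
split=> //.
case: c1 => y0 [fy0 py0]; have := Hmax y0 fy0 => le0.
move=> j; rewrite lt0n; apply/negP => /eqP E.
move: le0 py0; rewrite /nw_prod [X in (_ <= X)%N](bigD1 j) //= E mul0n; lia.
Qed.

Lemma notC1 : ~ C1 -> forall y, feasible k y -> nw_prod v y = 0%N.
Proof.
move=> nc y fy; apply/eqP; rewrite -leqn0 leqNgt; apply/negP => p.
by apply: nc; exists y.
Qed.

Lemma C1_of_kn : (n <= k)%N -> C1.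
Proof.
move=> nk.
pose f i := xchoose (hv i).
exists (f @: setT); split.
  rewrite /feasible; apply: leq_trans (leq_imset_card _ _) _.
  by rewrite cardsT card_ord.
rewrite /nw_prod; apply: prodn_gt0 => j.
apply: leq_trans (xchooseP (hv j)) _; apply: v_le_util.
by apply: imset_f; rewrite inE.
Qed.

Lemma PO_x : pareto_optimal v k x.
Proof.
case: (hx) => fx [H1 H2]; split=> //; case=> y [fy [Hle [i0 Hlt]]].
case: (classic C1) => c1.
  have [Hpos Hmax] := C1_pos c1.
  have := Hmax y fy; rewrite leqNgt => /negP; apply.
  rewrite /nw_prod; apply: (@prod_strict _ predT _ _ i0) => // j _.
  by rewrite Hpos Hle.
have Z := notC1 c1.
have [Hnum Hpp] := H2 Z.
set Px := [set j | (0 < util v j x)%N]; set Py := [set j | (0 < util v j y)%N].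
have sub : Px \subset Py.
  apply/subsetP => j; rewrite !inE => p; exact: leq_trans p (Hle j).
have Hn : num_pos v y = num_pos v x.
  apply/eqP; rewrite eqn_leq Hnum //=; exact: subset_leq_card.
have EP : Px == Py by rewrite -(subset_leqif_cards sub).2; apply/eqP; symmetry; exact: Hn.
have Epos j : (0 < util v j y)%N = (0 < util v j x)%N.
  by move/eqP/setP: EP => /(_ j); rewrite !inE.
have := Hpp y fy Hn; rewrite leqNgt => /negP; apply.
rewrite /pos_prod [X in (_ < X)%N](eq_bigl (fun j => 0 < util v j x)%N); last by move=> j; rewrite Epos.
have Hlt2 := Hlt; apply: (@prod_strict _ (fun j => 0 < util v j x)%N _ _ i0) Hlt2.
  by move=> j pj; rewrite pj Hle.
by rewrite -Epos; apply: leq_ltn_trans Hlt.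
Qed.

Lemma worthless : C1 -> (#|x| < k)%N -> forall i (T : {set 'I_m}),
  (util v i T <= util v i x)%N.
Proof.
move=> c1 lt i T.
have W : forall g j, g \notin x -> v j g = 0%N.
  move=> g j gx; apply/eqP; rewrite -leqn0 leqNgt; apply/negP => p.
  case: PO_x => _; apply; exists (g |: x); split.
    by rewrite /feasible cardsU1 gx /= add1n.
  split; first by move=> j'; rewrite util_add // leq_addl.
  by exists j; rewrite util_add // -[X in (X < _)%N]add0n ltn_add2r.
rewrite (util_split v i T x) [X in (_ <= X)%N](util_split v i x T).
have -> : util v i (T :\: x) = 0%N.
  by rewrite /util big1 // => g; rewrite inE => /andP[gx _]; apply: W.
by rewrite setIC addn0 leq_addr.
Qed.

Lemma x_nonempty (i : 'I_n) : (0 < k)%N -> exists g, g \in x.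
Proof.
move=> k0; case: (set_0Vmem x) => [x0|[g gx]]; last by exists g.
exfalso; have Hu j : util v j x = 0%N by rewrite x0 util_set0.
case: (classic C1) => c1.
  by have := (C1_pos c1).1 i; rewrite Hu.
have [Hnum _] := hx.2.2 (notC1 c1).
case: (hv i) => g pg.
have := Hnum [set g]; rewrite /feasible cards1 => /(_ k0).
have -> : num_pos v x = 0%N.
  rewrite /num_pos; apply/eqP; rewrite cards_eq0; apply/eqP/setP => j.
  by rewrite !inE Hu.
rewrite leqn0 cards_eq0 => /eqP/setP/(_ i).
by rewrite !inE /util big_set1 pg.
Qed.

Lemma card_swap (h g : 'I_m) : h \in x -> g \notin x ->
  #|x :\ h :|: [set g]| = #|x|.
Proof.
move=> hx' gx; rewrite setUC cardsU1 in_setD1 (negbTE gx) andbF /=.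
by rewrite [in RHS](cardsD1 h x) hx'.
Qed.

Lemma util_rat i (X Y : {set 'I_m}) :
  (util v i X)%:R = (util v i (X :&: Y))%:R + (util v i (X :\: Y))%:R :> rat.
Proof. by rewrite (util_split v i X Y) natrD. Qed.

Lemma Prop1_x : (0 < k)%N -> Prop1 v k x.
Proof.
move=> k0 i.
have [S [fS ES]] := maxval_wit v k i.
case: (x_nonempty i k0) => g0 g0x.
case: (leqP k n) => kn.
  case: (@arg_maxnP _ g0 predT (v i) erefl) => g' _ Hg'.
  exists g0, g'; split=> //.
  rewrite /Prop_share ler_pdivrMr ?ltr0n // -natrM ler_nat -ES.
  have H1 := @util_le_card _ _ v i S g' (fun j => Hg' j isT).
  have H2 : (v i g' <= util v i (x :\ g0 :|: [set g']))%N.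
    by apply: v_le_util; rewrite !inE eqxx orbT.
  apply: (leq_trans H1); rewrite [X in (_ <= X)%N]mulnC; apply: leq_mul => //; exact: leq_trans fS kn.
have c1 := C1_of_kn (ltnW kn); have [Hpos Hmax] := C1_pos c1.
case: hx => fx _.
case: (ltnP #|x| k) => xk.
  exists g0, g0; split=> //; rewrite setUC setD1K //.
  rewrite /Prop_share ler_pdivrMr ?ltr0n // -natrM ler_nat -ES.
  have := worthless c1 xk i S; nia.
apply: NNPP => Hn.
have Nv g g' : g \in x -> (util v i (x :\ g :|: [set g']))%:R < Prop_share v k i.
  move=> gx; rewrite ltNge; apply/negP => H; apply: Hn; exists g, g'; by split.
have Hu : (util v i x)%:R < Prop_share v k i.
  by have := Nv g0 g0 g0x; rewrite setUC setD1K.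
have Hps : Prop_share v k i * n%:R = (util v i S)%:R.
  by rewrite /Prop_share ES divfK // pnatr_eq0 -lt0n.
have HP := @pair_sum _ (x :\: S) (S :\: x) (fun j => (v i j)%:R) (cc v x i)
  (fun _ => Prop_share v k i) (n.-1)%:R.
have PS0 : 0 <= Prop_share v k i by apply: divr_ge0.
have xk' : #|x| = k by apply/eqP; rewrite eqn_leq xk andbT; exact: fx.
have Hpair : forall g h, g \in S :\: x -> h \in x :\: S ->
    (v i g)%:R - (v i h)%:R <= cc v x i h * Prop_share v k i.
  move=> g h; rewrite !inE => /andP[gx gS] /andP[hS hx'].
  have fy : feasible k (x :\ h :|: [set g]) by rewrite /feasible card_swap.
  have HPI := PI i Hpos hx' gx (Hmax _ fy).
  have E := congr1 (fun t => t%:R : rat) (util_swap v i hx' gx).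
  rewrite /= !natrD in E.
  have HU := Nv h g hx'. have c0 := cc_ge0 v x i h.
  have := ler_wpM2l c0 (ltW HU).
  move: HPI E HU c0; set c := cc v x i h; set Uy := (util v i _)%:R.
  move=> *; nra.
have := HP Hpair (fun _ _ => PS0) (sum_cc i S Hpos).
rewrite sumr_const.
have Ew : \sum_(j in S :\: x) (v i j)%:R = (util v i (S :\: x))%:R :> rat.
  by rewrite /util natr_sum.
have Eq : \sum_(j in x :\: S) (v i j)%:R = (util v i (x :\: S))%:R :> rat.
  by rewrite /util natr_sum.
rewrite Ew Eq => Hsum.
have EV := util_rat i S x. have EU := util_rat i x S.
rewrite setIC in EV.
have cx := cardsID S x. have cS := cardsID x S.
rewrite setIC in cS.
move: fS; rewrite /feasible => fS.
have ab : (#|S :\: x| <= #|x :\: S|)%N by lia.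
have n1 : 1 <= n%:R :> rat by rewrite ler1n.
have Hut := ler0n rat (util v i (x :&: S)).
case: (posnP #|S :\: x|) => b0.
  have : util v i (S :\: x) = 0%N.
    by move/eqP: b0; rewrite cards_eq0 => /eqP ->; rewrite util_set0.
  move=> w0; rewrite w0 in EV.
  have := ler0n rat (util v i (x :\: S)).
  have := ler_wpM2l PS0 n1. rewrite mulr1. lra.
have ab' : (#|S :\: x|%:R <= #|x :\: S|%:R :> rat) by rewrite ler_nat.
have b1 : (1 <= #|S :\: x|%:R :> rat) by rewrite ler1n.
have Hn1 : (n.-1)%:R = n%:R - 1 :> rat.
  by rewrite -{2}(prednK hn) -addn1 natrD addrK.
rewrite Hn1 in Hsum.
have Hq0 := ler0n rat (util v i (x :\: S)).
rewrite -Hps in EV.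
have Ew' : (util v i (S :\: x))%:R = Prop_share v k i * n%:R - (util v i (x :&: S))%:R :> rat by lra.
have Eq' : (util v i (x :\: S))%:R = (util v i x)%:R - (util v i (x :&: S))%:R :> rat by lra.
rewrite Ew' Eq' -[Prop_share v k i *+ _]mulr_natr in Hsum.
apply: (fin1 Hsum ab' b1 n1 Hut _ Hu PS0); lra.
Qed.

Lemma RRS_x : alpha_RRS v (1 / n%:R) k x.
Proof.
move=> i; have [T [fT ET]] := maxval_wit v (k %/ n) i; rewrite /RRS -ET.
suff H : (util v i T <= n * util v i x)%N.
  by rewrite mul1r ler_pdivrMl ?ltr0n // -natrM ler_nat.
case: (posnP (k %/ n)) => t0.
  by move: fT; rewrite /feasible t0 leqn0 cards_eq0 => /eqP ->; rewrite util_set0.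
have nk : (n <= k)%N by rewrite -(divn_gt0 _ hn).
have c1 := C1_of_kn nk; have [Hpos Hmax] := C1_pos c1.
case: hx => fx _.
case: (ltnP #|x| k) => xk.
  by apply: leq_trans (worthless c1 xk i T) _; apply: leq_pmull.
have xk' : #|x| = k by apply/eqP; rewrite eqn_leq xk andbT; exact: fx.
have Hpair : forall g h, g \in T :\: x -> h \in x :\: T ->
    (v i g)%:R - (v i h)%:R <= cc v x i h * ((util v i x)%:R + (v i g)%:R).
  move=> g h; rewrite !inE => /andP[gx gT] /andP[hT hx'].
  have fy : feasible k (x :\ h :|: [set g]) by rewrite /feasible card_swap.
  have HPI := PI i Hpos hx' gx (Hmax _ fy).
  have E := congr1 (fun t => t%:R : rat) (util_swap v i hx' gx).
  rewrite /= !natrD in E.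
  have c0 := cc_ge0 v x i h.
  have := mulr_ge0 c0 (ler0n rat (v i h)).
  move: HPI E c0; set c := cc v x i h; set Uy := (util v i _)%:R.
  move=> *; nra.
have HM : forall g, g \in T :\: x -> 0 <= (util v i x)%:R + (v i g)%:R :> rat.
  by move=> g _; apply: addr_ge0.
have := pair_sum Hpair HM (sum_cc i T Hpos).
rewrite big_split /= sumr_const.
have Ew : \sum_(j in T :\: x) (v i j)%:R = (util v i (T :\: x))%:R :> rat.
  by rewrite /util natr_sum.
have Eq : \sum_(j in x :\: T) (v i j)%:R = (util v i (x :\: T))%:R :> rat.
  by rewrite /util natr_sum.
rewrite Ew Eq => Hsum.
have EV := util_split v i T x. have EU := util_split v i x T.
rewrite setIC in EV.
have cx := cardsID T x. have cT := cardsID x T.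
rewrite setIC in cT.
move: fT; rewrite /feasible => fT.
have tn := leq_trunc_div k n.
have ba : (#|T :\: x| + n <= #|x :\: T| + 1)%N by nia.
case: (posnP #|T :\: x|) => b0.
  have : util v i (T :\: x) = 0%N.
    by move/eqP: b0; rewrite cards_eq0 => /eqP ->; rewrite util_set0.
  move=> w0; rewrite w0 addn0 in EV; rewrite EV EU.
  apply: leq_trans (leq_addr _ _) _; apply: leq_pmull => //.
have Hn1 : (n.-1)%:R = n%:R - 1 :> rat.
  by rewrite -{2}(prednK hn) -addn1 natrD addrK.
rewrite Hn1 in Hsum.
rewrite -(ler_nat rat) natrM EV EU natrD natrD.
apply: (fin2 (a := #|x :\: T|%:R) (b := #|T :\: x|%:R)) => //.
- by rewrite -[(util v i x)%:R *+ _]mulr_natr EU natrD in Hsum.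
- have := ba; rewrite -(ler_nat rat) !natrD; lra.
- by rewrite ler1n.
- by rewrite ler1n.
Qed.

Lemma Prop_x : (n <= k)%N -> alpha_Prop v (1 / (2 * n - 1)%N%:R) k x.
Proof.
move=> nk i; have RR := RRS_x i.
case: (eqVneq n 1%N) => n1.
  move: RR; rewrite /RRS /Prop_share (_ : (k %/ n)%N = k); last by rewrite n1 divn1.
  rewrite (_ : (2 * n - 1)%N = 1%N); last by rewrite n1.
  have -> : n%:R = 1 :> rat by rewrite n1.
  by rewrite !(divr1, mul1r).
have n2 : (2 <= n)%N by rewrite ltn_neqAle eq_sym n1 hn.
have k0 : (0 < k)%N by apply: leq_trans hn nk.
case: (Prop1_x k0 i) => g [g' [gx H]].
have Hy : (util v i (x :\ g :|: [set g']) <= util v i x + v i g')%N.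
  apply: leq_trans (util_U1_le v i _ g') _.
  by rewrite leq_add2r util_D1_le.
have Hg' : (v i g' <= RRS v k i)%N.
  have -> : v i g' = util v i [set g'] by rewrite /util big_set1.
  apply: maxval_ge; rewrite /feasible cards1 divn_gt0 //.
move: RR; rewrite mul1r ler_pdivrMl ?ltr0n // => RR.
rewrite mul1r ler_pdivrMl ?ltr0n; last by rewrite subn_gt0; nia.
have N2 : n%:R + 1 <= (2 * n - 1)%N%:R :> rat.
  have N2' : (n + 1 <= 2 * n - 1)%N by lia. move: N2'; rewrite -(ler_nat rat) natrD. move=> H2; exact: H2.
have := ler_wpM2r (ler0n rat (util v i x)) N2.
move: H; rewrite -(ler_nat rat) natrD in Hy.
rewrite -(ler_nat rat) in Hg'.
have := ler_wpM2l (ler0n rat n) Hg'.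
move=> *; nra.
Qed.

End Main.

Theorem theorem5 (n m k : nat) (v : 'I_n -> 'I_m -> nat)
  (hn : (0 < n)%N) (hk : (k <= m)%N)
  (hv : forall i : 'I_n, exists j : 'I_m, (0 < v i j)%N)
  (x : {set 'I_m}) (hx : MNW v k x) :
  pareto_optimal v k x /\
  ((0 < k)%N -> Prop1 v k x) /\
  alpha_RRS v (1 / n%:R) k x /\
  ((n <= k)%N -> alpha_Prop v (1 / (2 * n - 1)%N%:R) k x).
Proof.
split. have := @PO_x n m k v hn hk x hx. exact. 
split. exact: (@Prop1_x n m k v hn hk hv x hx).
split. exact: (@RRS_x n m k v hn hk hv x hx).
exact: (@Prop_x n m k v hn hk hv x hx).
Qed.
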